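(* Let $G$ be a connected graph and let $S\subseteq V(G)$. The following statements are equivalent: (1) there is a GS ordering of $G$ whose $\mathcal{F}$-tree has all elements of $S$ as leaves; (2) there is a spanning tree of $G$ in which all elements of $S$ are leaves; (3) the set $V(G)\setminus S$ is a connected dominating set of $G$.
   Context: All graphs are finite, simple, undirected, connected and non-empty. A GS (generic search) ordering of $G$ is an ordering $(v_1,\dots,v_n)$ of $V(G)$ such that every $v_i$ with $i>1$ has a neighbor among $v_1,\dots,v_{i-1}$. Its $\mathcal{F}$-tree is the spanning tree rooted at $v_1$ in which the parent of $v_i$ ($i>1$) is its neighbor appearing leftmost in the ordering. Spanning trees are rooted; a leaf is a non-root vertex without children (the root is never a leaf). A connected dominating set is a set $D\subseteq V(G)$ such that $G[D]$ is connected and every vertex outside $D$ has a neighbor in $D$. *)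

(* Defs.v *)
From mathcomp Require Import all_boot.
Set Implicit Arguments. Unset Strict Implicit. Unset Printing Implicit Defensive.

Definition simple_graph (T : finType) (e : rel T) : Prop :=
  symmetric e /\ irreflexive e.

Definition graph_connected (T : finType) (e : rel T) : Prop :=
  0 < #|T| /\ forall x y : T, connect e x y.

Definition GS_ordering (T : finType) (e : rel T) (s : seq T) : Prop :=
  perm_eq s (enum T) /\
  {in s, forall v, 0 < index v s -> has (e v) (take (index v s) s)}.

Definition Fparent (T : finType) (e : rel T) (s : seq T) (v : T) : T :=
  let pre := take (index v s) s in nth v pre (find (e v) pre).

(* Rooted spanning tree given by a root r and a parent map p:
   every non-root vertex is adjacent to its parent, and iterating the
   parent map from any vertex reaches the root. *)
Definition rooted_spanning_tree (T : finType) (e : rel T) (r : T) (p : T -> T)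
  : Prop :=
  (forall v, v != r -> e v (p v)) /\ (forall v, exists k, iter k p v = r).

Definition is_leaf (T : finType) (r : T) (p : T -> T) (v : T) : bool :=
  (v != r) && [forall u, (u != r) ==> (p u != v)].

Definition induced_connected (T : finType) (e : rel T) (D : {set T}) : Prop :=
  D != set0 /\
  {in D &, forall x y, connect [rel a b | [&& e a b, a \in D & b \in D]] x y}.

Definition dominating (T : finType) (e : rel T) (D : {set T}) : Prop :=
  forall v, v \notin D -> exists2 u, u \in D & e v u.

Definition connected_dominating (T : finType) (e : rel T) (D : {set T}) : Prop :=
  induced_connected e D /\ dominating e D.

(* Main.v *)
Require Import Defs.
From mathcomp Require Import all_boot zify.
Set Implicit Arguments. Unset Strict Implicit.

Lemma index_take_lt (T : eqType) (x : T) k l : x \in take k l -> index x l < k.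
Proof.
move=> H; rewrite -(cat_take_drop k l) index_cat H.
have := H; rewrite -index_mem => H1; apply: leq_trans H1 _.
rewrite size_take; case: ifP => //; lia.
Qed.

Definition gsp (T : finType) (e : rel T) (l : seq T) :=
  {in l, forall v, 0 < index v l -> has (e v) (take (index v l) l)}.

Lemma gsp_rcons (T : finType) (e : rel T) l w :
  gsp e l -> w \notin l -> has (e w) l -> gsp e (rcons l w).
Proof.
move=> H wn hw v; rewrite -cats1 mem_cat inE; case/orP=> [vl|/eqP->].
  rewrite index_cat vl take_cat index_mem vl; exact: H.
rewrite index_cat (negbTE wn) /= eqxx addn0 take_size_cat //.
Qed.

Lemma nth_find_cat (T : eqType) (a : pred T) (x0 : T) A B :
  has a A -> nth x0 (A ++ B) (find a (A ++ B)) \in A.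
Proof.
move=> H; rewrite find_cat H nth_cat.
have := H; rewrite has_find => ->; apply: mem_nth; by rewrite -has_find.
Qed.

Lemma Fparent_in (T : finType) (e : rel T) l v :
  has (e v) (take (index v l) l) ->
  Fparent e l v \in take (index v l) l /\ e v (Fparent e l v).
Proof.
move=> H; rewrite /Fparent; split; [apply: mem_nth; by rewrite -has_find | exact: nth_find].
Qed.

Lemma Fparent_or (T : finType) (e : rel T) l v :
  Fparent e l v \in take (index v l) l \/ Fparent e l v = v.
Proof.
case: (boolP (has (e v) (take (index v l) l))) => H.
  by left; case: (Fparent_in H).
right; rewrite /Fparent nth_default //; move: H; rewrite has_find; lia.
Qed.

Lemma P1P2 (T : finType) (e : rel T) (S : {set T}) r s :
  GS_ordering e (r :: s) ->
  rooted_spanning_tree e r (Fparent e (r :: s)).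
Proof.
case=> Hperm Hgs.
have inl v : v \in r :: s by rewrite (perm_mem Hperm) mem_enum.
have Hpar v : v != r -> Fparent e (r :: s) v \in take (index v (r::s)) (r::s)
   /\ e v (Fparent e (r :: s) v).
  move=> vr; apply: Fparent_in; apply: Hgs; first exact: inl.
  by rewrite /= eq_sym (negbTE vr).
split; first by move=> v /Hpar [].
move=> v; move: {2}(index v (r :: s)) (leqnn (index v (r :: s))) => n.
elim: n v => [|n IH] v.
  move=> H; case: (eqVneq v r) => [->|vr]; first by exists 0.
  by move: H; rewrite /= eq_sym (negbTE vr).
case: (eqVneq v r) => [->|vr]; first by exists 0.
case: (Hpar v vr) => /index_take_lt H _ Hn.
have [k Hk] := IH (Fparent e (r :: s) v) ltac:(lia).
by exists k.+1; rewrite iterSr.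
Qed.

Lemma P2P3 (T : finType) (e : rel T) (S : {set T}) r p :
  symmetric e ->
  rooted_spanning_tree e r p -> {in S, forall v, is_leaf r p v} ->
  connected_dominating e (~: S).
Proof.
move=> esym [Hadj Hreach] Hleaf.
have rD : r \in ~: S.
  rewrite inE; apply/negP => /Hleaf; by rewrite /is_leaf eqxx.
have pD v : v != r -> p v \in ~: S.
  move=> vr; case: (eqVneq (p v) r) => [->|pr] //.
  rewrite inE; apply/negP => /Hleaf /andP [_ /forallP /(_ v)].
  by rewrite vr eqxx.
set e' := [rel a b | [&& e a b, a \in ~: S & b \in ~: S]].
have toR x : x \in ~: S -> connect e' x r.
  have [k Hk] := Hreach x.
  elim: k x Hk => [|k IH] x Hk xD; first by rewrite -Hk /= connect0.
  case: (eqVneq x r) => [->|xr]; first exact: connect0.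
  rewrite iterSr in Hk.
  apply: connect_trans (IH _ Hk (pD _ xr)).
  apply: connect1; by rewrite /= Hadj // xD pD.
have e'sym : symmetric e'.
  move=> a b /=; rewrite esym; by case: (e b a); case: (a \in ~: S); case: (b \in ~: S).
split; last first.
  move=> v vS; exists (p v); last apply: Hadj; rewrite ?pD //;
  apply/negP => /eqP vr; move: vS; by rewrite vr rD.
split; first by apply/set0Pn; exists r.
move=> x y xD yD; apply: connect_trans (toR _ xD) _.
by rewrite (sym_connect_sym e'sym) toR.
Qed.

Lemma build (T : finType) (e : rel T) (D : {set T}) r :
  symmetric e -> r \in D ->
  {in D &, forall x y, connect [rel a b | [&& e a b, a \in D & b \in D]] x y} ->
  exists a, [/\ uniq (r :: a), {subset r :: a <= D}, {subset D <= r :: a}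
              & gsp e (r :: a)].
Proof.
move=> esym rD Hc.
set e' := [rel a b | [&& e a b, a \in D & b \in D]].
have done_case a : ~~ [exists w, [&& w \in D, w \notin r :: a & has (e w) (r :: a)]] ->
    {subset D <= r :: a}.
  move/existsPn => Hn x xD.
  have Hcl : closed e' (mem (r :: a)).
    move=> y z /= /andP [eyz /andP [yD zD]].
    case yin: (y \in r :: a); case zin: (z \in r :: a) => //.
      have Hz : has (e z) (r :: a) by apply/hasP; exists y; rewrite // esym.
      by have := Hn z; rewrite zD zin Hz.
    have Hy : has (e y) (r :: a) by apply/hasP; exists z.
    by have := Hn y; rewrite yD yin Hy.
  by rewrite -(closed_connect Hcl (Hc _ _ rD xD)) inE eqxx.
suff: forall n a, #|D| - size (r :: a) <= n -> uniq (r :: a) -> {subset r :: a <= D} ->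
   gsp e (r :: a) -> exists a, [/\ uniq (r :: a), {subset r :: a <= D}, {subset D <= r :: a}
              & gsp e (r :: a)].
  move=> H; apply: (H #|D| [::]) => //; first exact: leq_subr.
  by move=> x; rewrite inE => /eqP ->.
  by move=> v; rewrite inE => /eqP -> /=; rewrite eqxx.
elim=> [|n IH] a Hn Hu Hs Hg; (case: (boolP [exists w, [&& w \in D, w \notin r :: a & has (e w) (r :: a)]]);
   last by move=> /done_case Hd; exists a).
  case/existsP => w /and3P [wD wn _].
  have : size (w :: r :: a) <= #|D|.
    rewrite cardE; apply: uniq_leq_size; first by rewrite cons_uniq wn Hu.
    by move=> x; rewrite mem_enum inE => /orP [/eqP ->|/Hs].
  move: Hn => /=; lia.
case/existsP => w /and3P [wD wn hw].
have : size (w :: r :: a) <= #|D|.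
  rewrite cardE; apply: uniq_leq_size; first by rewrite cons_uniq wn Hu.
  by move=> x; rewrite mem_enum inE => /orP [/eqP ->|/Hs].
move=> Hsz.
apply: (IH (rcons a w)).
- move: Hn Hsz => /=; rewrite size_rcons; lia.
- by rewrite -rcons_cons rcons_uniq wn Hu.
- by move=> x; rewrite -rcons_cons mem_rcons inE => /orP [/eqP ->|/Hs].
- by rewrite -rcons_cons; apply: gsp_rcons.
Qed.

Lemma P3P1 (T : finType) (e : rel T) (S : {set T}) :
  symmetric e -> connected_dominating e (~: S) ->
  exists (r : T) (s : seq T),
      GS_ordering e (r :: s) /\
      {in S, forall v, is_leaf r (Fparent e (r :: s)) v}.
Proof.
move=> esym [[/set0Pn [r rD] Hc] Hdom].
have [a [Hu Hs1 Hs2 Hg]] := build esym rD Hc.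
set A := r :: a.
have AS x : x \in A -> x \notin S by move/Hs1; rewrite inE.
have uniql : uniq (A ++ enum S).
  rewrite cat_uniq Hu enum_uniq andbT /=; apply/hasPn => x; rewrite mem_enum.
  by move=> xS; apply/negP => /AS; rewrite xS.
have inl x : x \in A ++ enum S.
  rewrite mem_cat mem_enum; case: (boolP (x \in S)) => xS; first by rewrite orbT.
  by rewrite Hs2 // inE.
exists r, (a ++ enum S).
have -> : r :: (a ++ enum S) = A ++ enum S by [].
split.
  split; first by apply: (uniq_perm uniql (enum_uniq T)) => x; rewrite mem_enum inl.
  move=> v _; rewrite index_cat => Hi.
  case: (boolP (v \in A)) => vA.
    rewrite take_cat index_mem vA; apply: Hg => //; move: Hi; by rewrite vA.
  rewrite take_cat ltnNge leq_addr [~~ true]/= has_cat.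
  have vS : v \in S by move: (inl v); rewrite mem_cat (negbTE vA) mem_enum.
  have [u uD evu] := Hdom v ltac:(by rewrite inE vS).
  by apply/orP; left; apply/hasP; exists u => //; apply: Hs2.
have FD u : Fparent e (A ++ enum S) u \in ~: S.
  case: (boolP (u \in A)) => uA.
    case: (Fparent_or e (A ++ enum S) u) => [|->]; last by apply: Hs1.
    rewrite index_cat uA take_cat index_mem uA => /mem_take /Hs1 //.
  have uS : u \in S by move: (inl u); rewrite mem_cat (negbTE uA) mem_enum.
  have [w wD euw] := Hdom u ltac:(by rewrite inE uS).
  apply: Hs1; rewrite /Fparent index_cat (negbTE uA) take_cat ltnNge leq_addr [~~ true]/=.
  apply: nth_find_cat; apply/hasP; exists w => //; exact: Hs2.
move=> v vS; rewrite /is_leaf; apply/andP; split.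
  by apply/negP => /eqP vr; move: rD; rewrite -vr inE vS.
apply/forallP => u; apply/implyP => _; apply/negP => /eqP H.
by move: (FD u); rewrite H inE vS.
Qed.

Theorem theorem3p5 (T : finType) (e : rel T) (S : {set T}) :
  simple_graph e -> graph_connected e ->
  let P1 := exists (r : T) (s : seq T),
      GS_ordering e (r :: s) /\
      {in S, forall v, is_leaf r (Fparent e (r :: s)) v} in
  let P2 := exists (r : T) (p : T -> T),
      rooted_spanning_tree e r p /\ {in S, forall v, is_leaf r p v} in
  let P3 := connected_dominating e (~: S) in
  (P1 <-> P2) /\ (P2 <-> P3).
Proof.
move=> [esym _] _ P1 P2 P3.
have h12 : P1 -> P2.
  case=> r [s [Hg Hl]]; exists r, (Fparent e (r :: s)); split => //.
  exact: P1P2 S _ _ Hg.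
have h23 : P2 -> P3 by case=> r [p [Ht Hl]]; exact: P2P3 esym Ht Hl.
have h31 : P3 -> P1 by exact: P3P1.
split; split; auto.
Qed.
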